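(* The full subcategory of $\mathrm{Vect}_{\mathbb{F}}^{\mathbb{M}^{\circ}}$ consisting of pointwise finite-dimensional, sequentially continuous functors is a weak Serre subcategory: if $F_1\to F_2\to F_3\to F_4\to F_5$ is an exact sequence of functors $\mathbb{M}^{\circ}\to\mathrm{Vect}_{\mathbb{F}}$ with $F_1,F_2,F_4,F_5$ pointwise finite-dimensional and sequentially continuous, then $F_3$ is pointwise finite-dimensional and sequentially continuous.
   Context: Fix a field $\mathbb{F}$. Equip $\mathbb{R}^2$ with the partial order $(x,y)\preceq(x',y')$ iff $x'\le x$ and $y\le y'$. Fix reals $a<b$ and let $\mathbb{M}=\{(x,y): a\le x+y\le b\}$. Functors $\mathbb{M}^{\circ}\to\mathrm{Vect}_{\mathbb{F}}$ are contravariant in $\preceq$. A functor $G$ is sequentially continuous if for every $\preceq$-increasing sequence $(u_k)$ in $\mathbb{M}$ converging (Euclidean) to $u$, the natural map $G(u)\to\varprojlim_kG(u_k)$ is an isomorphism. *)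

(* Defs.v *)
From HB Require Import structures.
From mathcomp Require Import all_boot all_order all_algebra.
From mathcomp Require Import all_classical all_reals all_analysis.
From mathcomp Require Import Rstruct Rstruct_topology.
From Stdlib Require Import Rdefinitions.
Set Implicit Arguments. Unset Strict Implicit. Unset Printing Implicit Defensive.
Import Order.TTheory GRing.Theory Num.Theory.
Local Open Scope ring_scope.
Local Open Scope classical_set_scope.

Definition R2 := (Rdefinitions.R * Rdefinitions.R)%type.

Definition ple (p q : R2) : bool := (q.1 <= p.1) && (p.2 <= q.2).

Definition Mpt (a b : Rdefinitions.R) :=
  {p : R2 | (a <= p.1 + p.2) && (p.1 + p.2 <= b)}.

Definition Mle a b (u v : Mpt a b) : bool := ple (val u) (val v).

Record functor (F : fieldType) (a b : Rdefinitions.R) := Functor {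
  fobj : Mpt a b -> lmodType F;
  fmap : forall u v : Mpt a b, Mle u v -> {linear fobj v -> fobj u};
  fmap_id : forall (u : Mpt a b) (h : Mle u u) x, fmap h x = x;
  fmap_comp : forall (u v w : Mpt a b) (h1 : Mle u v) (h2 : Mle v w)
      (h3 : Mle u w) x, fmap h3 x = fmap h1 (fmap h2 x)
}.

Record nat_trans (F : fieldType) a b (G H : functor F a b) := NatTrans {
  ntc : forall u, {linear fobj G u -> fobj H u};
  ntc_nat : forall u v (h : Mle u v) x,
      ntc u (fmap G h x) = fmap H h (ntc v x)
}.

Definition exact_at (F : fieldType) a b (G H K : functor F a b)
  (f : nat_trans G H) (g : nat_trans H K) : Prop :=
  forall u (y : fobj H u), ntc g u y = 0 <-> exists x, ntc f u x = y.

Definition finite_dim (F : fieldType) (V : lmodType F) : Prop :=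
  exists s : seq V, forall v : V,
    exists c : 'I_(size s) -> F, v = \sum_(i < size s) c i *: s`_i.

Definition pfd (F : fieldType) a b (G : functor F a b) : Prop :=
  forall u, finite_dim (fobj G u).

(* Sequential continuity: for every ⪯-increasing sequence (u_k) in M
   converging (Euclidean topology on R^2) to w, the natural map
   G(w) -> lim_k G(u_k),  x |-> (G(u_k ⪯ w) x)_k,  is a bijection onto the
   inverse limit (compatible families).  The hypothesis hle : u_k ⪯ w is
   needed only to name the maps; it follows from the others. *)
Definition seq_cont (F : fieldType) a b (G : functor F a b) : Prop :=
  forall (u : nat -> Mpt a b) (w : Mpt a b)
         (hinc : forall k, Mle (u k) (u k.+1))
         (hle : forall k, Mle (u k) w),
    (fun k => val (u k)) @ \oo --> val w ->
    (forall x x' : fobj G w,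
        (forall k, fmap G (hle k) x = fmap G (hle k) x') -> x = x') /\
    (forall y : forall k, fobj G (u k),
        (forall k, y k = fmap G (hinc k) (y k.+1)) ->
        exists x : fobj G w, forall k, fmap G (hle k) x = y k).

(* Main.v *)
Require Import Defs.
From HB Require Import structures.
From mathcomp Require Import all_boot all_order all_algebra.
From mathcomp Require Import all_classical all_reals all_analysis.
From mathcomp Require Import Rstruct Rstruct_topology.
Set Implicit Arguments. Unset Strict Implicit. Unset Printing Implicit Defensive.
Import Order.TTheory GRing.Theory Num.Theory.
Local Open Scope ring_scope.

Definition subsp (F : fieldType) (V : lmodType F) (P : V -> Prop) :=
  [/\ P 0, (forall x y, P x -> P y -> P (x + y)) & (forall c x, P x -> P (c *: x))].

Lemma subsp_sum (F : fieldType) (V : lmodType F) (P : V -> Prop) m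
  (c : 'I_m -> F) (g : 'I_m -> V) :
  subsp P -> (forall i, P (g i)) -> P (\sum_i c i *: g i).
Proof.
move=> [P0 PD PZ] Pg; elim/big_ind: _ => //; move=> i _; exact: PZ.
Qed.

Lemma L1 (F : fieldType) n (P : 'rV[F]_n -> Prop) : subsp P ->
  exists m (A : 'M[F]_(m, n)), forall v, P v <-> (v <= A)%MS.
Proof.
move=> hP.
pose Q r := `[< exists m (A : 'M[F]_(m, n)), (forall i, P (row i A)) /\ \rank A = r >].
have ex : exists r, Q r.
  exists 0%N; apply/asboolP; exists 0%N, (0 : 'M[F]_(0, n)); split; first by case.
  by apply/eqP; rewrite -leqn0 rank_leq_row.
have ub : forall r, Q r -> (r <= n)%N.
  by move=> r /asboolP [m [A [_ <-]]]; exact: rank_leq_col.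
case: (ex_maxnP ex ub) => r /asboolP [m [A [HA Hr]]] Hmax.
exists m, A => v; split.
- move=> Pv; apply/negPn/negP => Hv.
  have QB : Q (\rank (col_mx A v)).
    apply/asboolP; exists (m + 1)%N, (col_mx A v); split => // i.
    rewrite -[i]splitK; case: (fintype.split i) => j /=.
      by rewrite rowKu.
    by rewrite rowKd row_id.
  have le1 := Hmax _ QB.
  have sAB : (A <= col_mx A v)%MS by rewrite -addsmxE addsmxSl.
  have sBA : (col_mx A v <= A)%MS.
    by rewrite -(mxrank_leqif_sup sAB).2 eqn_leq (mxrank_leqif_sup sAB).1 Hr le1.
  have svB : (v <= col_mx A v)%MS by rewrite -addsmxE addsmxSr.
  by rewrite (submx_trans svB sBA) in Hv.
- move/submxP => [D ->]; rewrite mulmx_sum_row; by apply: subsp_sum.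
Qed.

Lemma L2 (F : fieldType) n (P : nat -> 'rV[F]_n -> Prop) :
  (forall j, subsp (P j)) -> (forall j v, P j.+1 v -> P j v) ->
  exists J, forall j, (J <= j)%N -> forall v, P J v -> P j v.
Proof.
move=> hP hdec.
have dec : forall j i, (i <= j)%N -> forall v, P j v -> P i v.
  elim=> [|j IH] i; first by rewrite leqn0 => /eqP->.
  rewrite leq_eqVlt => /orP[/eqP-> //|]; rewrite ltnS => hij v /hdec; exact: IH.
pose Q r := `[< exists j m (A : 'M[F]_(m, n)),
   (forall v, P j v <-> (v <= A)%MS) /\ \rank A = r >].
have ex : exists r, Q r.
  have [m [A HA]] := L1 (hP 0%N).
  by exists (\rank A); apply/asboolP; exists 0%N, m, A.
case: (ex_minnP ex) => r /asboolP [J [m [A [HA Hr]]]] Hmin.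
exists J => j Jj v PJv.
have [m' [B HB]] := L1 (hP j).
have AB : (B <= A)%MS.
  apply/row_subP => i; apply/HA; apply: (dec j J Jj); apply/HB; exact: row_sub.
have le : (\rank A <= \rank B)%N.
  rewrite Hr; apply: Hmin; apply/asboolP; exists j, m', B; split => //.
have sAB : (A <= B)%MS.
  by rewrite -(mxrank_leqif_sup AB).2 eqn_leq (mxrank_leqif_sup AB).1 le.
apply/HB; apply: submx_trans sAB; exact/HA.
Qed.

Definition phi (F : fieldType) (V : lmodType F) n (g : 'I_n -> V) (c : 'rV[F]_n) : V :=
  \sum_i c 0 i *: g i.

Lemma phi0 (F : fieldType) (V : lmodType F) n (g : 'I_n -> V) : phi g 0 = 0.
Proof. by rewrite /phi big1 // => i _; rewrite mxE scale0r. Qed.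

Lemma phiD (F : fieldType) (V : lmodType F) n (g : 'I_n -> V) x y :
  phi g (x + y) = phi g x + phi g y.
Proof. by rewrite /phi -big_split; apply: eq_bigr => i _; rewrite mxE scalerDl. Qed.

Lemma phiZ (F : fieldType) (V : lmodType F) n (g : 'I_n -> V) a x :
  phi g (a *: x) = a *: phi g x.
Proof. by rewrite /phi scaler_sumr; apply: eq_bigr => i _; rewrite mxE scalerA. Qed.

Lemma phi_sum (F : fieldType) (V : lmodType F) n (g : 'I_n -> V) m
  (a : 'I_m -> F) (r : 'I_m -> 'rV[F]_n) :
  phi g (\sum_i a i *: r i) = \sum_i a i *: phi g (r i).
Proof.
elim/big_rec2: _ => [|i x y _ H]; first exact: phi0.
by rewrite phiD phiZ H.
Qed.

Lemma phi_row (F : fieldType) (V : lmodType F) n (g : 'I_n -> V) (c : 'I_n -> F) :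
  phi g (\row_i c i) = \sum_i c i *: g i.
Proof. by apply: eq_bigr => i _; rewrite mxE. Qed.

Lemma fd_fun (F : fieldType) (V : lmodType F) : finite_dim V ->
  exists n (g : 'I_n -> V), forall v, exists c : 'I_n -> F, v = \sum_i c i *: g i.
Proof. by move=> [s hs]; exists (size s), (fun i => s`_i). Qed.

Lemma subsp_pre (F : fieldType) (V : lmodType F) n (g : 'I_n -> V) (P : V -> Prop) :
  subsp P -> subsp (fun c => P (phi g c)).
Proof.
move=> [P0 PD PZ]; split; first by rewrite /= phi0.
- by move=> x y ? ? /=; rewrite phiD; apply: PD.
- by move=> c x ? /=; rewrite phiZ; apply: PZ.
Qed.

Lemma stab (F : fieldType) (V : lmodType F) (P : nat -> V -> Prop) :
  finite_dim V -> (forall j, subsp (P j)) -> (forall j v, P j.+1 v -> P j v) ->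
  exists J, forall j, (J <= j)%N -> forall v, P J v -> P j v.
Proof.
move=> /fd_fun [n [g hg]] hP hdec.
have [J HJ] := L2 (fun j => subsp_pre g (hP j)) (fun j v => hdec j (phi g v)).
exists J => j Jj v PJv; have [c hc] := hg v.
have := HJ j Jj (\row_i c i); rewrite /= phi_row -hc; exact.
Qed.

Lemma fd_sub (F : fieldType) (V : lmodType F) (P : V -> Prop) :
  finite_dim V -> subsp P ->
  exists m (g : 'I_m -> V), (forall i, P (g i)) /\
    forall v, P v -> exists c : 'I_m -> F, v = \sum_i c i *: g i.
Proof.
move=> /fd_fun [n [g0 hg]] hP.
have [m [A HA]] := L1 (subsp_pre g0 hP).
exists m, (fun i => phi g0 (row i A)); split.
  by move=> i; apply/HA; exact: row_sub.
move=> v Pv; have [c hc] := hg v.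
have : (\row_i c i <= A)%MS by apply/HA; rewrite /= phi_row -hc.
move/submxP => [D hD]; exists (fun i => D 0 i).
by rewrite hc -phi_row hD mulmx_sum_row phi_sum.
Qed.

Lemma fd_of_fun (F : fieldType) (V : lmodType F) n (g : 'I_n -> V) :
  (forall v, exists c : 'I_n -> F, v = \sum_i c i *: g i) -> finite_dim V.
Proof.
case: n g => [|k] g hg.
  exists [::] => v; exists (fun _ => 0); have [c ->] := hg v.
  by rewrite !big_ord0.
pose s := mkseq (fun i => g (inord i)) k.+1.
exists s => v; have [c ->] := hg v.
exists (fun i => c (inord i)).
rewrite -(big_mkord xpredT (fun i => c (inord i) *: s`_i)).
rewrite size_mkseq big_mkord; apply: eq_bigr => i _.
by rewrite nth_mkseq // inord_val.
Qed.
Fixpoint ext (F : fieldType) (V W : nat -> lmodType F)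
  (p : forall k, V k.+1 -> V k) (h : forall k, V k -> W k) (c : forall k, W k)
  (j : nat) : forall k, V k -> Prop :=
  match j with
  | 0 => fun k v => h k v = c k
  | j'.+1 => fun k v => exists v', @ext F V W p h c j' k.+1 v' /\ p k v' = v
  end.
Arguments ext {F V W} p h c j k v.

Fixpoint build (T : nat -> Type) (t0 : T 0%N) (nx : forall k, T k -> T k.+1) k : T k :=
  match k with 0 => t0 | k'.+1 => nx k' (build t0 nx k') end.

Lemma ML (F : fieldType) (V W : nat -> lmodType F)
  (p : forall k, {linear V k.+1 -> V k}) (q : forall k, {linear W k.+1 -> W k})
  (h : forall k, {linear V k -> W k}) (c : forall k, W k) :
  (forall k v, h k (p k v) = q k (h k.+1 v)) ->
  (forall k, c k = q k (c k.+1)) ->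
  (forall k, exists v, h k v = c k) ->
  (forall k, finite_dim (V k)) ->
  exists z : forall k, V k, (forall k, h k (z k) = c k) /\
                            (forall k, z k = p k (z k.+1)).
Proof.
move=> hcomm hc hsurj hfd.
pose E := ext (fun k => p k) (fun k => h k) c.
pose E0 := ext (fun k => p k) (fun k => h k) (fun k => 0).
have gdec : forall (c' : forall k, W k), (forall k, c' k = q k (c' k.+1)) ->
    forall j k v, ext (fun k => p k) (fun k => h k) c' j.+1 k v ->
                  ext (fun k => p k) (fun k => h k) c' j k v.
  move=> c' hc'; elim=> [|j IH] k v /= [v' [Hv' <-]].
    by rewrite hcomm Hv' -hc'.
  by exists v'; split => //; apply: IH.
have Edec := gdec c hc.
have E0dec := gdec (fun k => 0) (fun k => esym (linear0 (q k))).
have Edecn : forall j i k v, (i <= j)%N -> E j k v -> E i k v.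
  elim=> [|j IH] i k v; first by rewrite leqn0 => /eqP->.
  rewrite leq_eqVlt => /orP[/eqP-> //|]; rewrite ltnS => hij /Edec; exact: IH.
have Ene : forall j k, exists v, E j k v.
  elim=> [|j IH] k; first exact: hsurj.
  by have [v Hv] := IH k.+1; exists (p k v), v.
have Esub : forall j k v v', E j k v -> E j k v' -> E0 j k (v - v').
  rewrite /E /E0; elim=> [|j IH] k v v' /=; first by move=> H1 H2; rewrite linearB H1 H2 subrr.
  move=> [x [Hx <-]] [x' [Hx' <-]]; exists (x - x'); split; last by rewrite linearB.
  exact: IH.
have Eadd : forall j k v d, E j k v -> E0 j k d -> E j k (v + d).
  rewrite /E /E0; elim=> [|j IH] k v d /=; first by move=> H1 H2; rewrite linearD H1 H2 addr0.
  move=> [x [Hx <-]] [x' [Hx' <-]]; exists (x + x'); split; last by rewrite linearD.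
  exact: IH.
have E0sub : forall j k, subsp (E0 j k).
  rewrite /E0; elim=> [|j IH] k; split => /=.
  - exact: linear0.
  - by move=> x y Hx Hy; rewrite linearD Hx Hy addr0.
  - by move=> a x Hx; rewrite linearZ /= Hx scaler0.
  - by exists 0; split; [case: (IH k.+1) | rewrite linear0].
  - move=> x y [x' [Hx <-]] [y' [Hy <-]]; exists (x' + y'); split; last by rewrite linearD.
    by case: (IH k.+1) => _ D _; apply: D.
  - move=> a x [x' [Hx <-]]; exists (a *: x'); split; last by rewrite linearZ.
    by case: (IH k.+1) => _ _ Z; apply: Z.
have Jex : forall k, exists J, forall j, (J <= j)%N -> forall v, E0 J k v -> E0 j k v.
  by move=> k; apply: stab => // j v; exact: E0dec.
pose S k v := forall j, E j k v.
have Sfrom : forall k J, (forall j, (J <= j)%N -> forall v, E0 J k v -> E0 j k v) ->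
    forall v, E J k v -> S k v.
  move=> k J HJ v Hv j; case: (leqP j J) => hj; first exact: (Edecn J).
  have [w Hw] := Ene j k.
  have HwJ : E J k w by apply: (Edecn j) => //; exact: ltnW.
  have -> : v = w + (v - w) by rewrite addrC subrK.
  apply: Eadd => //; apply: HJ; first exact: ltnW.
  exact: Esub.
have S0 : exists v, S 0%N v.
  have [J HJ] := Jex 0%N; have [v Hv] := Ene J 0%N.
  by exists v; exact: Sfrom HJ v Hv.
have Sstep : forall k v, S k v -> exists v', S k.+1 v' /\ p k v' = v.
  move=> k v Sv; have [J HJ] := Jex k.+1.
  have [v' [Hv' <-]] := Sv J.+1.
  by exists v'; split => //; exact: Sfrom HJ v' Hv'.
pose T k := {v : V k | S k v}.
have [v0 Sv0] := cid S0.
pose nx := fun k (x : T k) =>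
  let e := cid (Sstep k (sval x) (svalP x)) in
  (exist (S k.+1) (sval e) (proj1 (svalP e)) : T k.+1).
have nxP : forall k (x : T k), p k (sval (nx k x)) = sval x.
  by move=> k x; rewrite /nx /=; case: (cid _) => y [].
exists (fun k => sval (build (exist (S 0%N) v0 Sv0 : T 0%N) nx k)); split.
  by move=> k; exact: (svalP (build _ nx k) 0%N).
by move=> k /=; rewrite nxP.
Qed.

Unset Implicit Arguments.
Set Strict Implicit.
Theorem lemma3p20 (F : fieldType) (a b : Rdefinitions.R)
  (hab : (a < b)%R)
  (F1 F2 F3 F4 F5 : functor F a b)
  (f1 : nat_trans F1 F2) (f2 : nat_trans F2 F3)
  (f3 : nat_trans F3 F4) (f4 : nat_trans F4 F5) :
  exact_at f1 f2 -> exact_at f2 f3 -> exact_at f3 f4 ->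
  pfd F1 -> seq_cont F1 -> pfd F2 -> seq_cont F2 ->
  pfd F4 -> seq_cont F4 -> pfd F5 -> seq_cont F5 ->
  pfd F3 /\ seq_cont F3.
Proof.
move=> ex12 ex23 ex34 hF1 c1 hF2 c2 hF4 c4 hF5 c5; split.
  move=> u.
  have [n2 [g2 hg2]] := fd_fun (hF2 u).
  pose P := fun y : fobj F4 u => exists x, ntc f3 u x = y.
  have sP : subsp P.
    split.
    - by exists 0; rewrite linear0.
    - by move=> x y [x1 <-] [y1 <-]; exists (x1 + y1); rewrite linearD.
    - by move=> c x [x1 <-]; exists (c *: x1); rewrite linearZ.
  have [m [g4 [Pg4 hg4]]] := fd_sub (hF4 u) sP.
  case: (choice Pg4) => xs hxs.
  apply: (@fd_of_fun _ _ (n2 + m) (fun i => match fintype.split i with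
     inl j => ntc f2 u (g2 j) | inr j => xs j end)).
  move=> y.
  have [d hd] := hg4 _ (ex_intro _ y erefl).
  have hz : ntc f3 u (y - \sum_i d i *: xs i) = 0.
    have e : \sum_i ntc f3 u (d i *: xs i) = \sum_i d i *: g4 i.
      by apply: eq_bigr => i _; rewrite linearZ /= hxs.
    by rewrite linearB linear_sum /= e -hd subrr.
  have [z hzz] := (ex23 u _).1 hz.
  have [e he] := hg2 z.
  exists (fun i => match fintype.split i with inl j => e j | inr j => d j end).
  rewrite big_split_ord /=.
  have sl : forall j, fintype.split (lshift m j) = inl j := fun j => @unsplitK n2 m (inl j).
  have sr : forall j, fintype.split (rshift n2 j) = inr j := fun j => @unsplitK n2 m (inr j).
  have -> : \sum_(j < n2) (match fintype.split (lshift m j) with inl j0 => e j0 | inr j0 => d j0 end *: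
       match fintype.split (lshift m j) with inl j0 => ntc f2 u (g2 j0) | inr j0 => xs j0 end)
     = \sum_j e j *: ntc f2 u (g2 j) by apply: eq_bigr => j _; rewrite sl.
  have -> : \sum_(j < m) (match fintype.split (rshift n2 j) with inl j0 => e j0 | inr j0 => d j0 end *:
       match fintype.split (rshift n2 j) with inl j0 => ntc f2 u (g2 j0) | inr j0 => xs j0 end)
     = \sum_j d j *: xs j by apply: eq_bigr => j _; rewrite sr.
  have ez : ntc f2 u z = \sum_j e j *: ntc f2 u (g2 j).
    by rewrite he linear_sum; apply: eq_bigr => j _; rewrite linearZ.
  by rewrite -ez hzz subrK.
move=> u w hinc hle hconv; split.
  move=> x x' hx; apply/eqP; rewrite -subr_eq0; apply/eqP.
  have hd : forall k, Defs.fmap F3 (hle k) (x - x') = 0.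
    by move=> k; rewrite linearB /= hx subrr.
  have h3d : ntc f3 w (x - x') = 0.
    apply: (c4 u w hinc hle hconv).1 => k.
    by rewrite -ntc_nat hd !linear0.
  have [y hy] := (ex23 w _).1 h3d.
  have := @ML F (fun k => fobj F1 (u k)) (fun k => fobj F2 (u k))
    (fun k => Defs.fmap F1 (hinc k)) (fun k => Defs.fmap F2 (hinc k)) (fun k => ntc f1 (u k))
    (fun k => Defs.fmap F2 (hle k) y).
  case.
  - by move=> k v; rewrite ntc_nat.
  - by move=> k /=; exact: (Defs.fmap_comp (hinc k) (hle k.+1) (hle k) y).
  - by move=> k; apply: (ex12 (u k) _).1; rewrite ntc_nat hy hd.
  - by move=> k; exact: hF1.
  move=> z [hz1 hz2].
  have [zz hzz] := (c1 u w hinc hle hconv).2 z hz2.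
  have e : ntc f1 w zz = y.
    apply: (c2 u w hinc hle hconv).1 => k.
    by rewrite -ntc_nat hzz hz1.
  by rewrite -hy -e; apply: (ex12 w _).2; exists zz.
move=> y hy.
have hyc : forall k, ntc f3 (u k) (y k) = Defs.fmap F4 (hinc k) (ntc f3 (u k.+1) (y k.+1)).
  by move=> k; rewrite {1}hy ntc_nat.
have [v hv] := (c4 u w hinc hle hconv).2 (fun k => ntc f3 (u k) (y k)) hyc.
have h4v : ntc f4 w v = 0.
  apply: (c5 u w hinc hle hconv).1 => k.
  rewrite -ntc_nat hv linear0; apply: (ex34 (u k) _).2; by exists (y k).
have [x' hx'] := (ex34 w v).1 h4v.
have := @ML F (fun k => fobj F2 (u k)) (fun k => fobj F3 (u k))
  (fun k => Defs.fmap F2 (hinc k)) (fun k => Defs.fmap F3 (hinc k)) (fun k => ntc f2 (u k))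
  (fun k => y k - Defs.fmap F3 (hle k) x').
case.
- by move=> k v'; rewrite ntc_nat.
- move=> k /=; rewrite linearB /= -(Defs.fmap_comp (hinc k) (hle k.+1) (hle k)).
  by rewrite -hy.
- move=> k; apply: (ex23 (u k) _).1.
  by rewrite linearB /= ntc_nat hx' hv subrr.
- by move=> k; exact: hF2.
move=> z [hz1 hz2].
have [zz hzz] := (c2 u w hinc hle hconv).2 z hz2.
exists (x' + ntc f2 w zz) => k.
by rewrite linearD /= -ntc_nat hzz hz1 subrKC.
Qed.
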